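(* Let $\Gamma$ be a discrete subgroup of $E(n)$, and suppose that $(G,V)$ and $(G',V')$ are finite index cocompact translation pairs of $\Gamma$. Then $V'=V+a$ for some $a\in\mathbb{R}^n$; in particular $\dim V=\dim V'$.
   Context: $E(n)$ denotes the group of isometries of $\mathbb{R}^n$, each of the form $x\mapsto Ax+a$ with $A\in O(n)$, with the topology of $O(n)\times\mathbb{R}^n$; discreteness refers to this topology. For a discrete $\Gamma\le E(n)$, a subgroup $G\le\Gamma$ and an affine subspace $V\subset\mathbb{R}^n$, the pair $(G,V)$ is a cocompact translation pair of $\Gamma$ if $gV=V$ for all $g\in G$, each restriction $g|_V$ is a translation of $V$, and the quotient $V/G$ is compact; it is a finite index cocompact translation pair if moreover $[\Gamma:G]<\infty$. *)

(* Defs.v *)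
From Stdlib Require Import Reals List.
From mathcomp Require Import ssreflect ssrfun ssrbool eqtype ssrnat fintype bigop.
Set Implicit Arguments.
Unset Strict Implicit.

Open Scope R_scope.

Definition vec (n : nat) := 'I_n -> R.

Definition vadd n (x y : vec n) : vec n := fun i => x i + y i.
Definition vsub n (x y : vec n) : vec n := fun i => x i - y i.
Definition vscale n (t : R) (x : vec n) : vec n := fun i => t * x i.

(* sup-norm distance (induces the standard topology of R^n) *)
Definition vclose n (x y : vec n) (e : R) : Prop := forall i, Rabs (x i - y i) < e.

(* An element of E(n): x |-> A x + a, recorded by the pair (A, a). *)
Record isom (n : nat) := Isom { lin : 'I_n -> 'I_n -> R ; trans : vec n }.

Definition orthogonal n (A : 'I_n -> 'I_n -> R) : Prop :=
  forall i j : 'I_n,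
    \big[Rplus/0]_(k < n) (A k i * A k j) = if i == j then 1 else 0.

Definition in_En n (g : isom n) : Prop := orthogonal (lin g).

Definition act n (g : isom n) (x : vec n) : vec n :=
  fun i => \big[Rplus/0]_(j < n) (lin g i j * x j) + trans g i.

(* group law of E(n): (g * h) x = g (h x) *)
Definition isom_comp n (g h : isom n) : isom n :=
  Isom (fun i j => \big[Rplus/0]_(k < n) (lin g i k * lin h k j))
       (fun i => \big[Rplus/0]_(k < n) (lin g i k * trans h k) + trans g i).

Definition isom_id n : isom n :=
  Isom (fun i j => if i == j then 1 else 0) (fun _ => 0).

Definition isom_inv n (g : isom n) : isom n :=
  Isom (fun i j => lin g j i)
       (fun i => - \big[Rplus/0]_(k < n) (lin g k i * trans g k)).

Definition subgroup_En n (S : isom n -> Prop) : Prop :=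
  (forall g, S g -> in_En g) /\
  S (isom_id n) /\
  (forall g h, S g -> S h -> S (isom_comp g h)) /\
  (forall g, S g -> S (isom_inv g)).

(* Discreteness in the topology of O(n) x R^n (entrywise / sup metric). *)
Definition isom_close n (g h : isom n) (e : R) : Prop :=
  (forall i j, Rabs (lin g i j - lin h i j) < e) /\
  (forall i, Rabs (trans g i - trans h i) < e).

Definition discrete n (S : isom n -> Prop) : Prop :=
  forall g, S g -> exists e, 0 < e /\
    forall h, S h -> isom_close g h e -> h = g.

Definition subgroup_of n (G Gamma : isom n -> Prop) : Prop :=
  subgroup_En G /\ forall g, G g -> Gamma g.

(* [Gamma : G] < infinity: finitely many left cosets g G cover Gamma *)
Definition finite_index n (G Gamma : isom n -> Prop) : Prop :=
  exists l : list (isom n),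
    (forall g, In g l -> Gamma g) /\
    forall x, Gamma x -> exists g h, In g l /\ G h /\ x = isom_comp g h.

Definition affine_subspace n (V : vec n -> Prop) : Prop :=
  (exists p, V p) /\
  forall x y t, V x -> V y ->
    V (vadd (vscale (1 - t) x) (vscale t y)).

Definition preserves n (g : isom n) (V : vec n -> Prop) : Prop :=
  forall y, V y <-> exists x, V x /\ act g x = y.

Definition translation_on n (g : isom n) (V : vec n -> Prop) : Prop :=
  exists b : vec n, forall x, V x -> act g x = vadd x b.

(* Compactness of V/G in the quotient topology: the open sets of V/G are
   exactly the images of G-invariant, relatively open subsets of V. *)
Definition rel_open n (V U : vec n -> Prop) : Prop :=
  (forall x, U x -> V x) /\
  forall x, U x -> exists e, 0 < e /\ forall y, V y -> vclose x y e -> U y.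

Definition G_invariant n (G : isom n -> Prop) (U : vec n -> Prop) : Prop :=
  forall g x, G g -> U x -> U (act g x).

Definition quotient_compact n (G : isom n -> Prop) (V : vec n -> Prop) : Prop :=
  forall (I : Type) (U : I -> vec n -> Prop),
    (forall i, rel_open V (U i) /\ G_invariant G (U i)) ->
    (forall x, V x -> exists i, U i x) ->
    exists l : list I, forall x, V x -> exists i, In i l /\ U i x.

Definition cocompact_translation_pair n (Gamma G : isom n -> Prop)
  (V : vec n -> Prop) : Prop :=
  subgroup_of G Gamma /\ affine_subspace V /\
  (forall g, G g -> preserves g V) /\
  (forall g, G g -> translation_on g V) /\
  quotient_compact G V.

Definition fi_cocompact_translation_pair n (Gamma G : isom n -> Prop)
  (V : vec n -> Prop) : Prop :=
  cocompact_translation_pair Gamma G V /\ finite_index G Gamma.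

(* Main.v *)
Require Import Defs.
From HB Require Import structures.
From Stdlib Require Import Reals List Lra FunctionalExtensionality Classical ClassicalEpsilon.
From mathcomp Require Import ssreflect ssrfun ssrbool eqtype ssrnat fintype bigop.
Set Implicit Arguments.
Unset Strict Implicit.
Open Scope R_scope.

HB.instance Definition _ := Monoid.isComLaw.Build R 0 Rplus (fun a b c => esym (Rplus_assoc a b c)) Rplus_comm Rplus_0_l.
HB.instance Definition _ := Monoid.isMulLaw.Build R 0 Rmult Rmult_0_l Rmult_0_r.
HB.instance Definition _ := Monoid.isAddLaw.Build R Rmult Rplus Rmult_plus_distr_r Rmult_plus_distr_l.

Notation rsum n F := (\big[Rplus/0]_(k < n) F k).

Lemma sumD n (F1 F2 : 'I_n -> R) : \big[Rplus/0]_(k < n) (F1 k + F2 k) = rsum n F1 + rsum n F2.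
Proof. by rewrite big_split. Qed.

Lemma sumZ n c (F : 'I_n -> R) : \big[Rplus/0]_(k < n) (c * F k) = c * rsum n F.
Proof. by rewrite big_distrr. Qed.

Lemma sumN n (F : 'I_n -> R) : \big[Rplus/0]_(k < n) (- F k) = - rsum n F.
Proof. rewrite (eq_bigr (fun k => (-1) * F k)); [rewrite sumZ; ring | move=> k _; ring]. Qed.

Lemma sum_ge0 n (F : 'I_n -> R) : (forall i, 0 <= F i) -> 0 <= rsum n F.
Proof. move=> H. apply: (big_ind (fun x => 0 <= x)); [lra | move=> x y; lra | by move=> i _; apply: H]. Qed.

Lemma sum_ge_term n (F : 'I_n -> R) i : (forall j, 0 <= F j) -> F i <= rsum n F.
Proof. move=> H. rewrite (bigD1 i) //=. 
have H2 : 0 <= \big[Rplus/0]_(j < n | j != i) F j.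
  rewrite big_mkcond. apply: sum_ge0 => j. case: (j != i) => //=. lra.
rewrite -{1}(Rplus_0_r (F i)). apply: Rplus_le_compat_l. exact: H2. Qed.

Lemma sum_delta n (i : 'I_n) (x : 'I_n -> R) :
  \big[Rplus/0]_(k < n) ((if i == k then 1 else 0) * x k) = x i.
Proof. rewrite (bigD1 i) //= eqxx big1 ?Rplus_0_r ?Rmult_1_l //.
move=> k /negPf Hk. by rewrite eq_sym Hk Rmult_0_l. Qed.

Lemma sum_exch n m (F : 'I_n -> 'I_m -> R) :
  \big[Rplus/0]_(i < n) \big[Rplus/0]_(j < m) F i j = \big[Rplus/0]_(j < m) \big[Rplus/0]_(i < n) F i j.
Proof. exact: exchange_big. Qed.
Definition Alin n (A : 'I_n -> 'I_n -> R) (v : vec n) : vec n :=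
  fun i => \big[Rplus/0]_(j < n) (A i j * v j).
Definition AlinT n (A : 'I_n -> 'I_n -> R) (v : vec n) : vec n :=
  fun i => \big[Rplus/0]_(j < n) (A j i * v j).
Definition dot n (u v : vec n) : R := \big[Rplus/0]_(j < n) (u j * v j).

Lemma act_comp n (g h : isom n) x : act (isom_comp g h) x = act g (act h x).
Proof.
apply: functional_extensionality => i. rewrite /act /isom_comp /=.
rewrite (eq_bigr (fun j => \big[Rplus/0]_(k < n) (lin g i k * lin h k j * x j))); last first.
  move=> j _. by rewrite big_distrl.
rewrite sum_exch.
under [in RHS]eq_bigr => k _ do rewrite Rmult_plus_distr_l.
rewrite sumD.
have -> : \big[Rplus/0]_(k < n) (lin g i k * \big[Rplus/0]_(j < n) (lin h k j * x j)) =
  \big[Rplus/0]_(k < n) \big[Rplus/0]_(j < n) (lin g i k * lin h k j * x j).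
  apply: eq_bigr => k _. rewrite big_distrr. apply: eq_bigr => j _ /=. ring.
by rewrite Rplus_assoc.
Qed.

Lemma act_id n x : act (isom_id n) x = x.
Proof.
apply: functional_extensionality => i. rewrite /act /=. rewrite sum_delta. ring.
Qed.

Lemma AtA n (A : 'I_n -> 'I_n -> R) v : orthogonal A -> AlinT A (Alin A v) = v.
Proof.
move=> HA. apply: functional_extensionality => i. rewrite /AlinT /Alin.
rewrite (eq_bigr (fun k => \big[Rplus/0]_(j < n) (A k i * A k j * v j))); last first.
  move=> k _. rewrite big_distrr. apply: eq_bigr => j _ /=. ring.
rewrite sum_exch.
rewrite (eq_bigr (fun j => (if i == j then 1 else 0) * v j)); last first.
  move=> j _. rewrite -big_distrl /=. by rewrite HA.
exact: sum_delta.
Qed.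

Lemma act_inv n (g : isom n) x : in_En g -> act (isom_inv g) (act g x) = x.
Proof.
move=> Hg. apply: functional_extensionality => i.
have := f_equal (fun f => f i) (AtA x Hg). rewrite /act /AlinT /Alin /= => <-.
rewrite (eq_bigr (fun j => lin g j i * \big[Rplus/0]_(j0 < n) (lin g j j0 * x j0) + lin g j i * trans g j)); last first.
  move=> j _. by rewrite Rmult_plus_distr_l.
rewrite sumD. by rewrite Rplus_assoc Rplus_opp_r Rplus_0_r.
Qed.

Lemma Alin_sub n A (u v : vec n) : Alin A (vsub u v) = vsub (Alin A u) (Alin A v).
Proof.
apply: functional_extensionality => i. rewrite /Alin /vsub.
rewrite (eq_bigr (fun j => A i j * u j + - (A i j * v j))); last by move=> j _; ring.
rewrite sumD sumN. ring.
Qed.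

Lemma act_diff n (g : isom n) x y : vsub (act g y) (act g x) = Alin (lin g) (vsub y x).
Proof.
rewrite Alin_sub. apply: functional_extensionality => i. rewrite /vsub /act /Alin. ring.
Qed.

Lemma dot_adj n A (u w : vec n) : dot u (Alin A w) = dot (AlinT A u) w.
Proof.
rewrite /dot /Alin /AlinT.
rewrite (eq_bigr (fun i => \big[Rplus/0]_(j < n) (u i * A i j * w j))); last first.
  move=> i _. rewrite big_distrr. apply: eq_bigr => j _ /=. ring.
rewrite sum_exch. apply: eq_bigr => j _. rewrite big_distrl. apply: eq_bigr => i _ /=. ring.
Qed.

Lemma dot_self0 n (c : vec n) : dot c c = 0 -> c = (fun _ => 0).
Proof.
move=> H. apply: functional_extensionality => i.
have := @sum_ge_term n (fun j => c j * c j) i. rewrite -/(dot c c) H.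
move=> /(_ (fun j => ltac:(nra))) Hi. nra.
Qed.

Definition Dir n (V : vec n -> Prop) (d : vec n) : Prop := forall x, V x -> V (vadd x d).

Lemma aff_three n (V : vec n -> Prop) x u w : affine_subspace V -> V x -> V u -> V w ->
  V (vadd x (vsub u w)).
Proof.
move=> [_ HV] Hx Hu Hw.
have Hm := HV _ _ (/2) Hx Hu.
have := HV _ _ (-1) Hm Hw.
have -> : vadd (vscale (1 - -1) (vadd (vscale (1 - / 2) x) (vscale (/ 2) u))) (vscale (-1) w)
  = vadd x (vsub u w).
  apply: functional_extensionality => i. rewrite /vadd /vscale /vsub. field.
done.
Qed.

Lemma Dir_diff n (V : vec n -> Prop) u w : affine_subspace V -> V u -> V w -> Dir V (vsub u w).
Proof. move=> HV Hu Hw x Hx. exact: aff_three. Qed.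

Lemma Dir_scale n (V : vec n -> Prop) t d : affine_subspace V -> Dir V d -> Dir V (vscale t d).
Proof.
move=> [_ HV] Hd x Hx. have := HV _ _ t Hx (Hd x Hx).
have -> : vadd (vscale (1 - t) x) (vscale t (vadd x d)) = vadd x (vscale t d).
  apply: functional_extensionality => i. rewrite /vadd /vscale. ring.
done.
Qed.

Lemma Dir_add n (V : vec n -> Prop) d e : Dir V d -> Dir V e -> Dir V (vadd d e).
Proof.
move=> Hd He x Hx. have := He _ (Hd x Hx).
have -> : vadd (vadd x d) e = vadd x (vadd d e).
  apply: functional_extensionality => i. rewrite /vadd. ring.
done.
Qed.

Lemma Dir_zero n (V : vec n -> Prop) : Dir V (fun _ => 0).
Proof.
move=> x Hx. have -> : vadd x (fun _ => 0) = x.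
  apply: functional_extensionality => i. rewrite /vadd. ring.
done.
Qed.

Lemma vec_bound n (f : vec n) : exists K, 0 <= K /\ forall i, Rabs (f i) <= K.
Proof.
exists (\big[Rplus/0]_(k < n) Rabs (f k)). split.
  apply: sum_ge0 => i. exact: Rabs_pos.
move=> i. exact: (@sum_ge_term n (fun k => Rabs (f k)) i (fun j => Rabs_pos _)).
Qed.

Lemma closed_sub_aux n (m : nat) : forall (W : vec n -> Prop),
  W (fun _ => 0) -> (forall u v, W u -> W v -> W (vadd u v)) ->
  (forall t u, W u -> W (vscale t u)) ->
  (forall w, W w -> forall i : 'I_n, (m <= i)%N -> w i = 0) ->
  forall d, (forall e, 0 < e -> exists w, W w /\ forall i, Rabs (d i - w i) < e) -> W d.
Proof.
elim: m => [|m IH] W H0 Hadd Hsc Hsupp d Hd.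
  have -> : d = (fun _ => 0); last done.
  apply: functional_extensionality => i.
  apply: NNPP => Hne.
  have Hpos : 0 < Rabs (d i) by apply: Rabs_pos_lt.
  have [w [Hw Hc]] := Hd _ Hpos.
  have := Hc i. rewrite (Hsupp w Hw i (leq0n _)) Rminus_0_r. lra.
case: (classic (exists i0 : 'I_n, exists u, nat_of_ord i0 = m /\ W u /\ u i0 <> 0)).
  move=> [i0 [u [Hi0 [Hu Hui0]]]].
  pose W' := fun w => W w /\ w i0 = 0.
  pose c := d i0 / u i0.
  pose d' := vadd d (vscale (- c) u).
  have Hd' : W' d'.
    apply: IH.
    - split; first done. done.
    - move=> a b [Ha Ha0] [Hb Hb0]. split; first exact: Hadd. rewrite /vadd Ha0 Hb0. ring.
    - move=> t a [Ha Ha0]. split; first exact: Hsc. rewrite /vscale Ha0. ring.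
    - move=> w [Hw Hw0] i Hi. case: (ltngtP m i) => Hmi.
      + apply: (Hsupp w Hw). exact: Hmi.
      + move: Hmi Hi. rewrite ltnNge => /negP; done.
      + have -> : i = i0 by apply: val_inj; rewrite /= Hi0 Hmi. done.
    - move=> e He.
      have [K [HK0 HK]] := vec_bound (fun i => u i / u i0).
      have He' : 0 < e / (1 + K) by apply: Rdiv_lt_0_compat; lra.
      have [w [Hw Hc]] := Hd _ He'.
      exists (vadd w (vscale (- (w i0 / u i0)) u)). split.
        split. apply: Hadd => //. exact: Hsc.
        rewrite /vadd /vscale. field. done.
      move=> i. rewrite /d' /vadd /vscale /c.
      have -> : d i + - (d i0 / u i0) * u i - (w i + - (w i0 / u i0) * u i)
        = (d i - w i) - (d i0 - w i0) * (u i / u i0) by field.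
      have H1 := Hc i. have H2 := Hc i0. have H3 := HK i.
      have Hek : e / (1 + K) * (1 + K) = e by field; lra.
      apply: Rle_lt_trans (Rabs_triang _ _) _. rewrite Rabs_Ropp Rabs_mult.
      have : Rabs (d i0 - w i0) * Rabs (u i / u i0) <= e / (1 + K) * K.
        apply: Rmult_le_compat => //; try exact: Rabs_pos. lra.
      nra.
  have -> : d = vadd d' (vscale c u).
    apply: functional_extensionality => i. rewrite /d' /vadd /vscale. ring.
  apply: Hadd; first by case: Hd'.
  exact: Hsc.
move=> Hno. apply: (IH W) => // w Hw i Hi.
case: (ltngtP m i) => Hmi.
- apply: (Hsupp w Hw). exact: Hmi.
- move: Hmi Hi. rewrite ltnNge => /negP; done.
- apply: NNPP => Hne. apply: Hno. exists i, w. split => //. 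
Qed.

Lemma closed_sub n (W : vec n -> Prop) :
  W (fun _ => 0) -> (forall u v, W u -> W v -> W (vadd u v)) ->
  (forall t u, W u -> W (vscale t u)) ->
  forall d, (forall e, 0 < e -> exists w, W w /\ forall i, Rabs (d i - w i) < e) -> W d.
Proof.
move=> H0 Hadd Hsc. apply: (@closed_sub_aux n n) => // w Hw i Hi.
have := ltn_ord i. rewrite ltnNge Hi. done.
Qed.

Fixpoint pw n (g : isom n) (k : nat) : isom n :=
  match k with 0%N => isom_id n | S k => isom_comp g (pw g k) end.

Lemma pw_in n (S : isom n -> Prop) g k : subgroup_En S -> S g -> S (pw g k).
Proof.
move=> [_ [Hid [Hc _]]] Hg. elim: k => [|k IH] //=. exact: Hc.
Qed.

Lemma act_pw n (g : isom n) k x : act (pw g k) x = iter k (act g) x.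
Proof. elim: k => [|k IH] /=; first exact: act_id. by rewrite act_comp IH. Qed.

Lemma power_in n (Gamma G' : isom n -> Prop) g :
  subgroup_En Gamma -> subgroup_of G' Gamma -> finite_index G' Gamma -> Gamma g ->
  exists k, (0 < k)%N /\ exists h, G' h /\ forall x, act h x = iter k (act g) x.
Proof.
move=> HGa [HG' HG'sub] [l [Hl Hcov]] Hg.
pose m := length l.
have Hex : forall i : 'I_m.+1, exists k, (k < m)%N /\
    exists h, G' h /\ pw g i = isom_comp (nth k l (isom_id n)) h.
  move=> i. have [c [h [Hc [Hh Heq]]]] := Hcov _ (pw_in i HGa Hg).
  have [k [Hk Hnth]] := In_nth _ _ (isom_id n) Hc.
  exists k. split; first by apply/ltP.
  exists h. by rewrite Hnth.
pose f := fun i => proj1_sig (constructive_indefinite_description _ (Hex i)).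
have Hf : forall i, (f i < m)%N /\ exists h, G' h /\ pw g i = isom_comp (nth (f i) l (isom_id n)) h.
  move=> i. rewrite /f. by case: (constructive_indefinite_description _ _).
pose F := fun i => Ordinal (proj1 (Hf i)).
have Hninj : ~ injective F.
  move=> Hinj. have := leq_card F Hinj. by rewrite !card_ord ltnn.
have [i [j [Hij HFij]]] : exists i j : 'I_m.+1, (nat_of_ord i < nat_of_ord j)%N /\ f i = f j.
  apply: NNPP => Hno. apply: Hninj => a b Hab.
  have Hfab : f a = f b by move: (f_equal val Hab).
  case: (ltngtP a b) => Hlt.
  - exfalso. apply: Hno. by exists a, b.
  - exfalso. apply: Hno. by exists b, a.
  - exact: val_inj.
have [_ [hi [Hhi Hpi]]] := Hf i.
have [_ [hj [Hhj Hpj]]] := Hf j.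
rewrite -HFij in Hpj.
set c := nth (f i) l (isom_id n) in Hpi Hpj.
have Hc : Gamma c.
  apply: Hl. apply: nth_In. apply/ltP. exact: (proj1 (Hf i)).
have HcE : in_En c by case: HGa => H _; exact: H.
have [HG'E [_ [HG'c HG'i]]] := HG'.
exists (j - i)%N. split; first by rewrite subn_gt0.
exists (isom_comp (isom_inv hi) hj). split; first by apply: HG'c => //; apply: HG'i.
move=> x. rewrite act_comp.
have Hj' : (nat_of_ord j = (nat_of_ord i) + (j - i))%N by rewrite subnKC // ltnW.
have E1 : act c (act hj x) = act c (act hi (iter (j - i) (act g) x)).
  rewrite -!act_comp -Hpi -Hpj !act_pw -iterD -Hj'. done.
have E2 := f_equal (act (isom_inv c)) E1. rewrite !act_inv // in E2.
rewrite E2 act_inv //. exact: HG'E.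
Qed.

Lemma dot_sub n (c w u : vec n) : dot c (vsub w u) = dot c w - dot c u.
Proof.
rewrite /dot /vsub.
rewrite (eq_bigr (fun j => c j * w j + - (c j * u j))); last by move=> j _; ring.
by rewrite sumD sumN.
Qed.

Lemma iter_trans n (g : isom n) (V : vec n -> Prop) b k x :
  (forall x, V x -> act g x = vadd x b) -> Dir V b -> V x ->
  iter k (act g) x = vadd x (vscale (INR k) b) /\ V (iter k (act g) x).
Proof.
move=> Hb HD Hx. elim: k => [|k [IH1 IH2]].
  split => //. rewrite /=. apply: functional_extensionality => i. rewrite /vadd /vscale. ring.
rewrite iterS Hb // IH1. split.
  apply: functional_extensionality => i. rewrite /vadd /vscale S_INR. ring.
rewrite -IH1. exact: HD.
Qed.

Lemma trans_Dir' n (Gamma G G' : isom n -> Prop) (V V' : vec n -> Prop) g b :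
  subgroup_En Gamma ->
  fi_cocompact_translation_pair Gamma G V ->
  fi_cocompact_translation_pair Gamma G' V' ->
  G g -> (forall x, V x -> act g x = vadd x b) -> Dir V' b.
Proof.
move=> HGa [[[HGs HGsub] [HV [Hpres [Htr Hcpt]]]] Hfi]
  [[[HG's HG'sub] [HV' [Hpres' [Htr' Hcpt']]]] Hfi'] Hg Hb.
have HDb : Dir V b.
  move=> x Hx. rewrite -Hb //. apply/(Hpres g Hg). by exists x.
have [k [Hk [h [Hh Hact]]]] := power_in HGa (conj HG's HG'sub) Hfi' (HGsub g Hg).
have [b' Hb'] := Htr' h Hh.
have HDb' : Dir V' b'.
  move=> x Hx. rewrite -Hb' //. apply/(Hpres' h Hh). by exists x.
have HhE : in_En h by case: HG's => H _; exact: H.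
pose A := lin h.
have [[x Hx] _] := HV. have [[y Hy] _] := HV'.
pose kb := vscale (INR k) b.
have HactV : forall z, V z -> act h z = vadd z kb.
  move=> z Hz. rewrite Hact. by case: (iter_trans k Hb HDb Hz).
have HDkb : Dir V kb by apply: Dir_scale.
have Akb : Alin A kb = kb.
  have : vsub (act h (vadd x kb)) (act h x) = kb.
    rewrite !HactV //; last exact: HDkb.
    apply: functional_extensionality => i. rewrite /vsub /vadd. ring.
  rewrite act_diff.
  have -> : vsub (vadd x kb) x = kb.
    apply: functional_extensionality => i. rewrite /vsub /vadd. ring.
  done.
have Ab' : Alin A b' = b'.
  have : vsub (act h (vadd y b')) (act h y) = b'.
    rewrite !Hb' //; last exact: HDb'.
    apply: functional_extensionality => i. rewrite /vsub /vadd. ring.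
  rewrite act_diff.
  have -> : vsub (vadd y b') y = b'.
    apply: functional_extensionality => i. rewrite /vsub /vadd. ring.
  done.
pose c := vsub kb b'.
pose w := vsub y x.
have Ac : Alin A c = c by rewrite /c Alin_sub Akb Ab'.
have ATc : AlinT A c = c by rewrite -{1}Ac AtA.
have Aw : Alin A w = vsub w c.
  rewrite /w -act_diff Hb' // HactV //.
  apply: functional_extensionality => i. rewrite /c /vsub /vadd. ring.
have Hcc : dot c c = 0.
  have := dot_adj A c w. rewrite ATc Aw dot_sub. lra.
have Hc0 := dot_self0 Hcc.
have -> : b = vscale (/ INR k) b'.
  apply: functional_extensionality => i.
  have := f_equal (fun f => f i) Hc0. rewrite /c /vsub /kb /vscale /= => Hi.
  have HkR : INR k <> 0 by apply: not_0_INR; move=> Hk0; rewrite Hk0 in Hk.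
  field_simplify_eq; [lra | done].
exact: Dir_scale.
Qed.

Lemma in_le_sumn (l : list nat) r : In r l -> (r <= fold_right addn 0%N l)%N.
Proof.
elim: l => [|a l IH] //= [->|H]; first exact: leq_addr.
apply: leq_trans (IH H) _. exact: leq_addl.
Qed.

Lemma Dir_incl n (Gamma G G' : isom n -> Prop) (V V' : vec n -> Prop) :
  subgroup_En Gamma ->
  fi_cocompact_translation_pair Gamma G V ->
  fi_cocompact_translation_pair Gamma G' V' ->
  forall d, Dir V d -> Dir V' d.
Proof.
move=> HGa HP HP'.
have HtrD : forall g b, G g -> (forall x, V x -> act g x = vadd x b) -> Dir V' b.
  move=> g b Hg Hb. exact: (trans_Dir' HGa HP HP' Hg Hb).
move: HP HP' => [[[HGs HGsub] [HV [Hpres [Htr Hcpt]]]] Hfi]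
  [[[HG's HG'sub] [HV' [Hpres' [Htr' Hcpt']]]] Hfi'].
pose U := fun (r : nat) (x : vec n) => V x /\ exists z s, V' z /\ s < INR r /\
  forall i, Rabs (x i - z i) <= s.
have [l Hl] : exists l : list nat, forall x, V x -> exists i, In i l /\ U i x.
  apply: Hcpt.
  - move=> r. split.
    + split; first by move=> x [].
      move=> x [Hx [z [s [Hz [Hs Hxz]]]]].
      exists ((INR r - s) / 2). split; first lra.
      move=> y Hy Hxy. split => //. exists z, (s + (INR r - s) / 2). split => //.
      split; first lra.
      move=> i. have H1 := Hxz i. have H2 := Hxy i.
      have -> : y i - z i = (x i - z i) - (x i - y i) by ring.
      apply: Rle_trans (Rabs_triang _ _) _. rewrite Rabs_Ropp. lra.
    + move=> g x Hg [Hx [z [s [Hz [Hs Hxz]]]]].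
      have [b Hb] := Htr g Hg.
      have HDb' := HtrD g b Hg Hb.
      split. apply/(Hpres g Hg). by exists x.
      exists (vadd z b), s. split; first exact: HDb'. split => //.
      move=> i. rewrite Hb // /vadd.
      have -> : x i + b i - (z i + b i) = x i - z i by ring. done.
  - move=> x Hx. have [[p' Hp'] _] := HV'.
    have [K [HK0 HK]] := vec_bound (vsub x p').
    have [r Hr] := INR_unbounded K.
    exists r. split => //. exists p', K. by split => //.
pose R1 := INR (fold_right addn 0%N l) + 1.
have Hnear : forall x, V x -> exists z, V' z /\ forall i, Rabs (x i - z i) < R1.
  move=> x Hx. have [r [Hr [_ [z [s [Hz [Hs Hxz]]]]]]] := Hl x Hx.
  exists z. split => // i. have := Hxz i.
  have := le_INR _ _ (leP (in_le_sumn Hr)). rewrite /R1. lra.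
have HR1 : 0 < R1 by rewrite /R1; have := pos_INR (fold_right addn 0%N l); lra.
move=> d Hd.
apply: closed_sub.
- exact: Dir_zero.
- move=> u v; exact: Dir_add.
- move=> t u; exact: Dir_scale.
move=> e He.
have [[p Hp] _] := HV.
pose t := 2 * R1 / e + 1.
have Ht : 0 < t.
  rewrite /t. have : 0 < 2 * R1 / e by apply: Rdiv_lt_0_compat; lra.
  lra.
have Hte : t * e = 2 * R1 + e by rewrite /t; field; lra.
have Hpt : V (vadd p (vscale t d)) by apply: Dir_scale.
have [z0 [Hz0 H0]] := Hnear p Hp.
have [z1 [Hz1 H1]] := Hnear _ Hpt.
exists (vscale (/ t) (vsub z1 z0)). split.
  apply: Dir_scale => //. exact: Dir_diff.
move=> i. rewrite /vscale /vsub.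
have := H0 i. have := H1 i. rewrite /vadd /vscale => Hi1 Hi0.
pose q := t * d i - (z1 i - z0 i).
have -> : d i - / t * (z1 i - z0 i) = q * / t by rewrite /q; field; lra.
have Hq : Rabs q < 2 * R1.
  have -> : q = (p i + t * d i - z1 i) - (p i - z0 i) by rewrite /q; ring.
  apply: Rle_lt_trans (Rabs_triang _ _) _. rewrite Rabs_Ropp. lra.
rewrite Rabs_mult (Rabs_pos_eq (/ t)); last by apply: Rlt_le; apply: Rinv_0_lt_compat.
apply: (Rmult_lt_reg_r t) => //.
rewrite Rmult_assoc Rinv_l; last lra.
rewrite Rmult_1_r. lra.
Qed.

Theorem mainTheorem7 (n : nat) (Gamma G G' : isom n -> Prop)
  (V V' : vec n -> Prop) :
  subgroup_En Gamma -> discrete Gamma ->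
  fi_cocompact_translation_pair Gamma G V ->
  fi_cocompact_translation_pair Gamma G' V' ->
  exists a : vec n, forall y, V' y <-> exists v, V v /\ y = vadd v a.
Proof.
move=> HGa _ HP HP'.
have I1 := Dir_incl HGa HP HP'.
have I2 := Dir_incl HGa HP' HP.
have HV : affine_subspace V by case: HP => [[_ [H _]] _].
have HV' : affine_subspace V' by case: HP' => [[_ [H _]] _].
have [[p Hp] _] := HV. have [[p' Hp'] _] := HV'.
exists (vsub p' p) => y. split.
- move=> Hy. exists (vadd p (vsub y p')). split.
    apply: (I2 _ (Dir_diff HV' Hy Hp')). done.
  apply: functional_extensionality => i. rewrite /vadd /vsub. ring.
- move=> [v [Hv ->]].
  have := I1 _ (Dir_diff HV Hv Hp) p' Hp'.
  have -> : vadd p' (vsub v p) = vadd v (vsub p' p).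
    apply: functional_extensionality => i. rewrite /vadd /vsub. ring.
  done.
Qed.
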